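(* Let $L$ be a positive integer and let $a_1\le\dots\le a_L$ and $b_1\le\dots\le b_L$ be numbers in $[0,1]$. Define $$\Phi(t)=\sum_{l=1}^L\mathbf{1}_{[0,b_l]}(t)+\sum_{l=1}^L\mathbf{1}_{[a_l,1]}(t),\qquad A_{\ge n}=\Phi^{-1}([n,2L])\quad(1\le n\le 2L).$$ Then: (i) each set $A_{\ge n}$ is a union of at most $L$ intervals, where intervals are understood cyclically, i.e. as arcs of $[0,1]$ with $0$ and $1$ identified; (ii) if for some $n$ the set $A_{\ge n}$ cannot be written as a union of fewer than $L$ such cyclic intervals, then the sequences interlace, i.e. either $a_1\le b_1\le a_2\le b_2\le\dots\le a_L\le b_L$ or $b_1\le a_1\le b_2\le a_2\le\dots\le b_L\le a_L$. *)

(* Defs.v *)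
From Stdlib Require Import Reals.
Open Scope R_scope.

(* Indices are 0-based: a_1..a_L of the paper are a 0 .. a (L-1). *)

(* Phi(t) = sum_l 1_[0,b_l](t) + sum_l 1_[a_l,1](t), as a natural number.
   (For t in [0,1], 1_[0,b](t) = [t <= b] and 1_[a,1](t) = [a <= t].) *)
Fixpoint Phi (L : nat) (a b : nat -> R) (t : R) : nat :=
  match L with
  | O => O
  | S k => (Phi k a b t
            + (if Rle_dec t (b k) then 1 else 0)
            + (if Rle_dec (a k) t then 1 else 0))%nat
  end.

Definition Age (L : nat) (a b : nat -> R) (n : nat) (t : R) : Prop :=
  0 <= t <= 1 /\ (n <= Phi L a b t <= 2 * L)%nat.

Definition convex (S : R -> Prop) : Prop :=
  forall x y z, S x -> S y -> x <= z <= y -> S z.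

(* A cyclic interval (arc of [0,1] with 0 and 1 identified): a subset of
   [0,1] that is either an ordinary interval, or wraps around 0 = 1, i.e.
   is the union of an interval containing 0 and an interval containing 1. *)
Definition cyc_interval (S : R -> Prop) : Prop :=
  (forall t, S t -> 0 <= t <= 1) /\
  (convex S \/
   exists I J : R -> Prop, convex I /\ convex J /\ I 0 /\ J 1 /\
     forall t, S t <-> (I t \/ J t)).

Definition union_at_most (k : nat) (A : R -> Prop) : Prop :=
  exists I : nat -> (R -> Prop),
    (forall i, (i < k)%nat -> cyc_interval (I i)) /\
    (forall t, A t <-> exists i, (i < k)%nat /\ I i t).

Definition nondecr (L : nat) (a : nat -> R) : Prop :=
  forall i j, (i <= j < L)%nat -> a i <= a j.

Definition interlace (L : nat) (x y : nat -> R) : Prop :=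
  (forall l, (l < L)%nat -> x l <= y l) /\
  (forall l, (S l < L)%nat -> y l <= x (S l)).

(* Main.v *)
Require Import Defs.
From Stdlib Require Import Reals Lra Lia Classical Arith.
Open Scope R_scope.

Fixpoint sumf (N : nat) (f : nat -> nat) : nat :=
  match N with O => O | S k => (sumf k f + f k)%nat end.

Lemma sumf_le_N N f : (forall k, (f k <= 1)%nat) -> (sumf N f <= N)%nat.
Proof. intros H; induction N; cbn [sumf]; [lia|]. specialize (H N); lia. Qed.

Lemma sumf_le_hi N f l : (forall k, (f k <= 1)%nat) ->
  (forall k, (l <= k < N)%nat -> f k = 0%nat) -> (sumf N f <= l)%nat.
Proof.
  intros H1; induction N; intros H2; cbn [sumf]; [lia|].
  destruct (le_lt_dec l N).
  - rewrite (H2 N) by lia. assert (sumf N f <= l)%nat by (apply IHN; intros; apply H2; lia). lia.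
  - pose proof (sumf_le_N N f H1). specialize (H1 N). lia.
Qed.

Lemma sumf_ge_lo N f m : (m <= N)%nat -> (forall k, (k < m)%nat -> f k = 1%nat) -> (m <= sumf N f)%nat.
Proof.
  revert m; induction N; intros m Hm H; cbn [sumf]; [lia|].
  destruct (le_lt_dec m N).
  - specialize (IHN m l H). lia.
  - assert (m = S N) by lia; subst.
    assert (H' : forall k, (k < N)%nat -> f k = 1%nat) by (intros; apply H; lia).
    specialize (IHN N (le_n N) H'). rewrite (H N) by lia. lia.
Qed.

Lemma sumf_le_lo N f l : (forall k, (f k <= 1)%nat) -> (forall k, (k < l)%nat -> f k = 0%nat) -> (sumf N f <= N - l)%nat.
Proof.
  intros H1 H2; induction N; cbn [sumf]; [lia|].
  destruct (le_lt_dec l N).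
  - specialize (H1 N). lia.
  - rewrite (H2 N) by lia. lia.
Qed.

Lemma sumf_ge_hi N f l : (forall k, (l <= k < N)%nat -> f k = 1%nat) -> (N - l <= sumf N f)%nat.
Proof.
  induction N; intros H; cbn [sumf]; [lia|].
  destruct (le_lt_dec l N).
  - rewrite (H N) by lia. assert (N - l <= sumf N f)%nat by (apply IHN; intros; apply H; lia). lia.
  - lia.
Qed.

Definition cntB (L : nat) (b : nat -> R) (x : R) := sumf L (fun k => if Rle_dec x (b k) then 1%nat else 0%nat).
Definition cntA (L : nat) (a : nat -> R) (x : R) := sumf L (fun k => if Rle_dec (a k) x then 1%nat else 0%nat).

Lemma Phi_split L a b x : Phi L a b x = (cntB L b x + cntA L a x)%nat.
Proof. unfold cntB, cntA; induction L; cbn [sumf Phi]; [reflexivity|]. rewrite IHL. lia. Qed.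

Lemma Phi_le L a b x : (Phi L a b x <= 2 * L)%nat.
Proof.
  rewrite Phi_split. unfold cntB, cntA.
  pose proof (sumf_le_N L (fun k => if Rle_dec x (b k) then 1%nat else 0%nat) ltac:(intros k; cbv beta; destruct Rle_dec; lia)).
  pose proof (sumf_le_N L (fun k => if Rle_dec (a k) x then 1%nat else 0%nat) ltac:(intros k; cbv beta; destruct Rle_dec; lia)).
  lia.
Qed.

Lemma Age_iff L a b n t : Age L a b n t <-> (0 <= t <= 1 /\ (n <= Phi L a b t)%nat).
Proof.
  unfold Age. pose proof (Phi_le L a b t). split; intros [H1 H2]; split; auto; lia.
Qed.

Lemma P_lower L a b x m j : (m <= L)%nat -> (forall k, (k < m)%nat -> a k <= x) ->
  (forall k, (j <= k < L)%nat -> x <= b k) -> (m + (L - j) <= Phi L a b x)%nat.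
Proof.
  intros Hm Ha Hb. rewrite Phi_split.
  assert (m <= cntA L a x)%nat.
  { apply sumf_ge_lo; auto. intros k Hk; cbv beta. destruct (Rle_dec (a k) x) as [|n]; [reflexivity| exfalso; apply n, Ha, Hk]. }
  assert (L - j <= cntB L b x)%nat.
  { apply sumf_ge_hi. intros k Hk; cbv beta. destruct (Rle_dec x (b k)) as [|n]; [reflexivity| exfalso; apply n, Hb, Hk]. }
  lia.
Qed.

Lemma P_upper L a b x l j : (forall k, (l <= k < L)%nat -> x < a k) -> (forall k, (k < j)%nat -> b k < x) ->
  (Phi L a b x <= l + (L - j))%nat.
Proof.
  intros Ha Hb. rewrite Phi_split.
  assert (cntA L a x <= l)%nat.
  { apply sumf_le_hi. intros k; cbv beta; destruct Rle_dec; lia.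
    intros k Hk; cbv beta. destruct (Rle_dec (a k) x) as [r|]; [exfalso; specialize (Ha k Hk); lra | reflexivity]. }
  assert (cntB L b x <= L - j)%nat.
  { apply sumf_le_lo. intros k; cbv beta; destruct Rle_dec; lia.
    intros k Hk; cbv beta. destruct (Rle_dec x (b k)) as [r|]; [exfalso; specialize (Hb k Hk); lra| reflexivity]. }
  lia.
Qed.

Lemma Phi_mono L a b t s : t <= s -> (forall j, (j < L)%nat -> t <= b j -> s <= b j) ->
  (Phi L a b t <= Phi L a b s)%nat.
Proof.
  revert t s; induction L as [|L IH]; intros t s Hts H; simpl; [lia|].
  assert (IH' : (Phi L a b t <= Phi L a b s)%nat) by (apply IH; auto).
  assert (H' : t <= b L -> s <= b L) by (apply H; lia).
  destruct (Rle_dec t (b L)) as [h1|h1]; [pose proof (H' h1)|];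
  destruct (Rle_dec s (b L)), (Rle_dec (a L) t), (Rle_dec (a L) s); try lia; exfalso; lra.
Qed.

Definition Lft (A : R -> Prop) (e t : R) : Prop := A t /\ t <= e /\ forall s, t <= s <= e -> A s.
Definition Rgt0 (A : R -> Prop) (t : R) : Prop := A t /\ forall s, 0 <= s <= t -> A s.
Definition Wp (A : R -> Prop) (t : R) : Prop := Lft A 1 t \/ Rgt0 A t.

Lemma Lft_convex A e : convex (Lft A e).
Proof.
  intros x y z [Ax [xe Hx]] [Ay [ye Hy]] [xz zy]. split; [apply Hx; lra|]. split; [lra|].
  intros s Hs; apply Hx; lra.
Qed.

Lemma Rgt0_convex A : (forall t, A t -> 0 <= t <= 1) -> convex (Rgt0 A).
Proof.
  intros HA x y z [Ax Hx] [Ay Hy] Hz. pose proof (HA x Ax). split; [apply Hy; lra|].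
  intros s Hs; apply Hy; lra.
Qed.

Lemma Lft_cyc A e : (forall t, A t -> 0 <= t <= 1) -> cyc_interval (Lft A e).
Proof.
  intros HA. split; [intros t [Ht _]; auto|]. left; apply Lft_convex.
Qed.

Lemma W_cyc A : (forall t, A t -> 0 <= t <= 1) -> cyc_interval (Wp A).
Proof.
  intros HA. split; [intros t [[Ht _]|[Ht _]]; auto|].
  destruct (classic (A 0)) as [A0|A0]; destruct (classic (A 1)) as [A1|A1].
  - right. exists (Rgt0 A), (Lft A 1). split; [apply Rgt0_convex; auto|].
    split; [apply Lft_convex|]. split; [split; auto; intros s Hs; replace s with 0 by lra; auto|].
    split; [split; [auto|split;[lra|]]; intros s Hs; replace s with 1 by lra; auto|].
    intros t; unfold Wp; tauto.
  - left. intros x y z Hx Hy Hz. right.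
    destruct Hx as [[Ax [_ Hx]]|Hx]; [exfalso; apply A1, Hx; pose proof (HA x Ax); lra|].
    destruct Hy as [[Ay [_ Hy]]|Hy]; [exfalso; apply A1, Hy; pose proof (HA y Ay); lra|].
    apply (Rgt0_convex A HA x y z); auto.
  - left. intros x y z Hx Hy Hz. left.
    destruct Hx as [Hx|[Ax Hx]]; [|exfalso; apply A0, Hx; pose proof (HA x Ax); lra].
    destruct Hy as [Hy|[Ay Hy]]; [|exfalso; apply A0, Hy; pose proof (HA y Ay); lra].
    apply (Lft_convex A 1 x y z); auto.
  - left. intros x y z Hx Hy Hz.
    destruct Hx as [[Ax [_ Hx]]|[Ax Hx]]; [exfalso; apply A1, Hx; pose proof (HA x Ax); lra|].
    exfalso; apply A0, Hx; pose proof (HA x Ax); lra.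
Qed.

Lemma cyc_ext (S1 S2 : R -> Prop) : (forall t, S1 t <-> S2 t) -> cyc_interval S1 -> cyc_interval S2.
Proof.
  intros Heq [H1 H2]. split; [intros t Ht; apply H1, Heq, Ht|].
  destruct H2 as [Hc | [I [J [HI [HJ [I0 [J1 HIJ]]]]]]].
  - left; intros x y z Hx Hy Hz; apply Heq; apply (Hc x y z); try apply Heq; auto.
  - right; exists I, J; repeat split; auto; intros Ht; [apply HIJ, Heq, Ht | apply Heq, HIJ, Ht].
Qed.

Lemma pad c k A : union_at_most c A -> (c <= k)%nat -> union_at_most k A.
Proof.
  intros [I [HI Hcov]] Hck. exists (fun i t => (i < c)%nat /\ I i t). split.
  - intros i Hi. destruct (lt_dec i c) as [l|l].
    + apply cyc_ext with (I i); [intros; tauto | auto].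
    + apply cyc_ext with (fun _ => False); [intros; tauto|].
      split; [intros; contradiction| left; intros x y z []].
  - intros t; rewrite Hcov; split; intros [i [Hi Ht]].
    + exists i; split; [lia|split; auto].
    + destruct Ht; exists i; split; auto.
Qed.

Lemma keep_cover (F : nat -> R -> Prop) (keep : nat -> Prop) N :
  (forall j, (j < N)%nat -> keep j -> cyc_interval (F j)) ->
  exists c I, (forall i, (i < c)%nat -> cyc_interval (I i)) /\
    (forall t, (exists i, (i < c)%nat /\ I i t) <-> (exists j, (j < N)%nat /\ keep j /\ F j t)) /\
    (c <= N)%nat /\
    (forall j, (j < N)%nat -> ~ keep j -> (c <= N - 1)%nat) /\
    (forall i j, (i < j < N)%nat -> ~ keep i -> ~ keep j -> (c <= N - 2)%nat).
Proof.
  induction N; intros HF.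
  - exists 0%nat, (fun _ _ => False). split; [intros; lia|]. split.
    + intros t; split; [intros [i [Hi _]]; lia | intros [j [Hj _]]; lia].
    + split; [lia|split; intros; lia].
  - destruct IHN as [c [I [H1 [H2 [H3 [H4 H5]]]]]]; [intros; apply HF; auto; lia|].
    destruct (classic (keep N)) as [K|K].
    + exists (S c), (fun i => if Nat.eq_dec i c then F N else I i). split; [|split;[|split;[|split]]].
      * intros i Hi. destruct (Nat.eq_dec i c); [apply HF; auto; lia | apply H1; lia].
      * intros t; split.
        -- intros [i [Hi Ht]]. destruct (Nat.eq_dec i c) as [e|e].
           ++ exists N; split; [lia|split; auto].
           ++ assert (Hx : exists i, (i<c)%nat /\ I i t) by (exists i; split; [lia|auto]).
              apply H2 in Hx. destruct Hx as [j [Hj [Kj Fj]]]. exists j; split; [lia|auto].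
        -- intros [j [Hj [Kj Fj]]]. destruct (Nat.eq_dec j N) as [e|e].
           ++ subst; exists c; split; [lia|]. destruct (Nat.eq_dec c c); [auto|congruence].
           ++ assert (Hx: exists j, (j<N)%nat /\ keep j /\ F j t) by (exists j; split; [lia|auto]).
              apply H2 in Hx. destruct Hx as [i [Hi Ii]]. exists i; split; [lia|].
              destruct (Nat.eq_dec i c); [lia|auto].
      * lia.
      * intros j Hj Kj. assert (j <> N) by (intro; subst; contradiction).
        specialize (H4 j ltac:(lia) Kj). lia.
      * intros i j Hij Ki Kj. assert (j <> N) by (intro; subst; contradiction).
        specialize (H5 i j ltac:(lia) Ki Kj). lia.
    + exists c, I. split; auto. split.
      * intros t; rewrite H2; split; intros [j [Hj [Kj Fj]]].
        -- exists j; split; [lia|auto].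
        -- exists j; split; [|auto]. assert (j <> N) by (intro; subst; contradiction). lia.
      * split; [lia|split].
        -- intros; lia.
        -- intros i j Hij Ki Kj. destruct (Nat.eq_dec j N).
           ++ subst. specialize (H4 i ltac:(lia) Ki). lia.
           ++ specialize (H5 i j ltac:(lia) Ki Kj). lia.
Qed.

Definition nxt (L : nat) (b : nat -> R) (l : nat) : R := if (S l <? L)%nat then b (S l) else 1.
Definition ess L b (A : R -> Prop) l : Prop :=
  A (b l) /\ (exists s, b l < s <= nxt L b l /\ ~ A s) /\ (exists u, 0 <= u <= b l /\ ~ A u).
Definition FF (A : R -> Prop) (b : nat -> R) (j : nat) : R -> Prop :=
  match j with O => Wp A | S l => Lft A (b l) end.
Definition KK L b (A : R -> Prop) (j : nat) : Prop :=
  match j with O => A 0 \/ A 1 | S l => ess L b A l end.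

Lemma nxt_lt L b l : (S l < L)%nat -> nxt L b l = b (S l).
Proof. intros H; unfold nxt; destruct (Nat.ltb_spec (S l) L); [auto|lia]. Qed.
Lemma nxt_ge L b l : ~ (S l < L)%nat -> nxt L b l = 1.
Proof. intros H; unfold nxt; destruct (Nat.ltb_spec (S l) L); [lia|auto]. Qed.

Lemma cover L a b n (HL : (0 < L)%nat)
  (Hr : forall l, (l < L)%nat -> 0 <= a l <= 1 /\ 0 <= b l <= 1) (Hb : nondecr L b) :
  forall t, Age L a b n t -> exists j, (j < S L)%nat /\ KK L b (Age L a b n) j /\ FF (Age L a b n) b j t.
Proof.
  intros t Ht.
  set (A := Age L a b n) in *.
  assert (HA : forall x, A x -> 0 <= x <= 1) by (intros x [Hx _]; exact Hx).
  assert (Hiff : forall x, A x <-> 0 <= x <= 1 /\ (n <= Phi L a b x)%nat) by (intros; apply Age_iff).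
  assert (WK : forall x, Wp A x -> A 0 \/ A 1).
  { intros x [[Ax [Hx1 H]]|[Ax H]]; pose proof (HA x Ax); [right; apply H; lra | left; apply H; lra]. }
  assert (S3 : forall d l x, (L - l = d)%nat -> (l < L)%nat -> Lft A (b l) x ->
     Wp A x \/ exists j, (l <= j < L)%nat /\ ess L b A j /\ Lft A (b j) x).
  { induction d; intros l x Hd Hl Hx; [lia|].
    destruct (classic (ess L b A l)) as [E|E]; [right; exists l; split; [lia|split; [exact E|exact Hx]]|].
    destruct Hx as [Ax [Hxb Hs]].
    assert (Abl : A (b l)) by (apply Hs; lra).
    unfold ess in E.
    apply not_and_or in E. destruct E as [E|E]; [contradiction|].
    apply not_and_or in E. destruct E as [E|E].
    - assert (Hs2 : forall s, b l < s <= nxt L b l -> A s).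
      { intros s Hs'; apply NNPP; intro Hn; apply E; exists s; split; auto. }
      destruct (lt_dec (S l) L) as [Hlt|Hlt].
      + rewrite (nxt_lt L b l Hlt) in Hs2.
        assert (Hm : b l <= b (S l)) by (apply Hb; lia).
        assert (Lx : Lft A (b (S l)) x).
        { split; [auto|split; [lra|]]. intros s Hs'.
          destruct (Rle_dec s (b l)); [apply Hs; lra | apply Hs2; lra]. }
        destruct (IHd (S l) x ltac:(lia) Hlt Lx) as [W|[j [Hj Rj]]]; [left; auto | right; exists j; split; [lia|auto]].
      + rewrite (nxt_ge L b l Hlt) in Hs2.
        left; left. assert (b l <= 1) by (apply Hr; auto).
        split; [auto|split;[lra|]]. intros s Hs'.
        destruct (Rle_dec s (b l)); [apply Hs; lra | apply Hs2; lra].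
    - assert (Hu : forall u, 0 <= u <= b l -> A u).
      { intros u Hu; apply NNPP; intro Hn; apply E; exists u; split; auto. }
      left; right. split; auto. intros s Hs'; apply Hu; lra. }
  assert (S4 : forall d k, (L - k = d)%nat -> (k <= L)%nat -> (forall j, (j < k)%nat -> b j < t) ->
     Wp A t \/ exists j, (j < L)%nat /\ ess L b A j /\ Lft A (b j) t).
  { induction d; intros k Hd Hk Hj.
    - left; left. assert (k = L) by lia; subst k.
      destruct (proj1 (Hiff t) Ht) as [Ht01 Hnt].
      split; [auto| split; [lra|]]. intros s Hs. apply Hiff. split; [lra|].
      eapply Nat.le_trans; [exact Hnt|]. apply Phi_mono; [lra|]. intros j Hjl Htb. specialize (Hj j Hjl). lra.
    - destruct (Rlt_le_dec (b k) t) as [Hlt|Hle].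
      + apply (IHd (S k)); [lia|lia|]. intros j Hjk. destruct (Nat.eq_dec j k); [subst; auto| apply Hj; lia].
      + assert (Hkl : (k < L)%nat) by lia.
        assert (Lx : Lft A (b k) t).
        { destruct (proj1 (Hiff t) Ht) as [Ht01 Hnt]. split; [auto|split;[auto|]].
          intros s Hs. apply Hiff. assert (b k <= 1) by (apply Hr; auto). split; [lra|].
          eapply Nat.le_trans; [exact Hnt|]. apply Phi_mono; [lra|].
          intros j Hjl Htb. destruct (lt_dec j k) as [l|l]; [specialize (Hj j l); lra|].
          assert (b k <= b j) by (apply Hb; lia). lra. }
        destruct (S3 (L - k)%nat k t eq_refl Hkl Lx) as [W|[j [Hj' [E Lj]]]];
          [left; auto|right; exists j; split; [lia|auto]]. }
  assert (H0 : forall j, (j < 0)%nat -> b j < t) by (intros j Hj0; exfalso; lia).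
  destruct (S4 L 0%nat ltac:(lia) ltac:(lia) H0) as [W|[j [Hj [E Lj]]]].
  - exists 0%nat; split; [lia|]; split; [simpl; apply (WK t W) | simpl; exact W].
  - exists (S j); split; [lia|]; split; simpl; auto.
Qed.

Lemma Zl L a b n (HL : (0 < L)%nat)
  (Hr : forall l, (l < L)%nat -> 0 <= a l <= 1 /\ 0 <= b l <= 1) (Hb : nondecr L b) :
  Age L a b n 0 -> forall u, 0 <= u <= b 0%nat -> Age L a b n u.
Proof.
  intros H0 u Hu. apply Age_iff in H0. destruct H0 as [_ H0]. apply Age_iff.
  assert (b 0%nat <= 1) by (apply Hr; auto). split; [lra|].
  eapply Nat.le_trans; [exact H0|]. apply Phi_mono; [lra|].
  intros j Hj _. assert (b 0%nat <= b j) by (apply Hb; lia). lra.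
Qed.

Lemma Phi0_ge L a b (Hr : forall l, (l < L)%nat -> 0 <= a l <= 1 /\ 0 <= b l <= 1) :
  (L <= Phi L a b 0)%nat.
Proof.
  assert (H0 : forall k, (k < 0)%nat -> a k <= 0) by (intros k Hk; exfalso; lia).
  pose proof (P_lower L a b 0 0 0 ltac:(lia) H0 ltac:(intros k Hk; apply Hr; lia)). lia.
Qed.

Lemma B1 L a b n (HL : (0 < L)%nat)
  (Hr : forall l, (l < L)%nat -> 0 <= a l <= 1 /\ 0 <= b l <= 1) (Hb : nondecr L b) :
  ~ Age L a b n 0 -> Age L a b n 1 -> forall l, (S l = L)%nat -> b l = 1.
Proof.
  intros A0 A1 l Hl.
  pose proof (Phi0_ge L a b Hr).
  assert (Hn : (L + 1 <= n)%nat).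
  { destruct (le_lt_dec n (Phi L a b 0)); [|lia]. exfalso; apply A0, Age_iff; split; [lra|auto]. }
  apply Age_iff in A1. destruct A1 as [_ A1].
  assert (Hbl := Hr l ltac:(lia)).
  destruct (Rlt_le_dec (b l) 1) as [h|h]; [|lra]. exfalso.
  assert (Hx : forall k, (L <= k < L)%nat -> 1 < a k) by (intros; exfalso; lia).
  pose proof (P_upper L a b 1 L L Hx ltac:(intros k Hk; assert (b k <= b l) by (apply Hb; lia); lra)).
  lia.
Qed.

Lemma strict_all L b : nondecr L b -> (forall l, (S l < L)%nat -> b l < b (S l)) ->
  forall k l, (k < l < L)%nat -> b k < b l.
Proof.
  intros Hb Hs k l Hkl. destruct l; [lia|].
  assert (b k <= b l) by (apply Hb; lia). specialize (Hs l ltac:(lia)). lra.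
Qed.

Lemma interl1 L a b n (HL : (0 < L)%nat)
  (Hr : forall l, (l < L)%nat -> 0 <= a l <= 1 /\ 0 <= b l <= 1) (Ha : nondecr L a) (Hb : nondecr L b) :
  ~ Age L a b n 0 -> (forall l, (S l < L)%nat -> ess L b (Age L a b n) l) ->
  Age L a b n (b (L-1)%nat) -> interlace L a b.
Proof.
  intros HA0 Hess HAL.
  assert (Hst : forall l, (S l < L)%nat -> b l < b (S l)).
  { intros l Hl. destruct (Hess l Hl) as [_ [[s [Hs _]] _]]. rewrite (nxt_lt L b l Hl) in Hs. lra. }
  pose proof (strict_all L b Hb Hst) as Hsa.
  pose proof (Phi0_ge L a b Hr).
  assert (Hn1 : (L + 1 <= n)%nat).
  { destruct (le_lt_dec n (Phi L a b 0)); [|lia]. exfalso; apply HA0, Age_iff; split; [lra|auto]. }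
  assert (Hab : forall l, (l < L)%nat -> (n <= Phi L a b (b l))%nat).
  { intros l Hl. apply (proj1 (Age_iff L a b n (b l))). destruct (Nat.eq_dec l (L-1)); [subst; auto| apply (proj1 (Hess l ltac:(lia)))]. }
  assert (Hn2 : (n <= L + 1)%nat).
  { pose proof (Hab (L-1)%nat ltac:(lia)).
    assert (Hx : forall k, (L <= k < L)%nat -> b (L-1)%nat < a k) by (intros; exfalso; lia).
    pose proof (P_upper L a b (b (L-1)%nat) L (L-1)%nat Hx ltac:(intros k Hk; apply Hsa; lia)). lia. }
  split.
  - intros l Hl. destruct (Rle_dec (a l) (b l)) as [|Hc]; [auto|exfalso]. apply Rnot_le_lt in Hc.
    assert (Hx : forall k, (l <= k < L)%nat -> b l < a k) by (intros k Hk; assert (a l <= a k) by (apply Ha; lia); lra).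
    pose proof (P_upper L a b (b l) l l Hx ltac:(intros k Hk; apply Hsa; lia)).
    pose proof (Hab l Hl). lia.
  - intros l Hl. destruct (Rle_dec (b l) (a (S l))) as [|Hc]; [auto|exfalso]. apply Rnot_le_lt in Hc.
    destruct (Hess l Hl) as [_ [[s [Hs Hns]] _]]. rewrite (nxt_lt L b l Hl) in Hs.
    assert (Hr1 := Hr l ltac:(lia)). assert (Hr2 := Hr (S l) Hl).
    apply Hns. apply Age_iff. split; [lra|].
    assert (Hx : forall k, (k < S (S l))%nat -> a k <= s) by (intros k Hk; assert (a k <= a (S l)) by (apply Ha; lia); lra).
    assert (Hy : forall k, (S l <= k < L)%nat -> s <= b k) by (intros k Hk; assert (b (S l) <= b k) by (apply Hb; lia); lra).
    pose proof (P_lower L a b s (S (S l)) (S l) ltac:(lia) Hx Hy). lia.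
Qed.

Lemma interl2 L a b n (HL2 : (2 <= L)%nat)
  (Hr : forall l, (l < L)%nat -> 0 <= a l <= 1 /\ 0 <= b l <= 1) (Ha : nondecr L a) (Hb : nondecr L b) :
  Age L a b n 0 -> (forall l, (1 <= l < L)%nat -> ess L b (Age L a b n) l) ->
  interlace L a b \/ interlace L b a.
Proof.
  intros HA0 Hess.
  pose proof (Zl L a b n ltac:(lia) Hr Hb HA0) as HZ.
  destruct (Hess 1%nat ltac:(lia)) as [Ab1 [_ [u [Hu Hnu]]]].
  assert (Hu0 : b 0%nat < u).
  { destruct (Rle_dec u (b 0%nat)) as [h|h]; [exfalso; apply Hnu, HZ; lra| lra]. }
  assert (Hu1 : u < b 1%nat).
  { destruct (Req_dec u (b 1%nat)) as [h|h]; [rewrite h in Hnu; contradiction| lra]. }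
  assert (Hst : forall l, (S l < L)%nat -> b l < b (S l)).
  { intros l Hl. destruct l; [lra|]. destruct (Hess (S l) ltac:(lia)) as [_ [[s [Hs _]] _]].
    rewrite (nxt_lt L b (S l) Hl) in Hs. lra. }
  pose proof (strict_all L b Hb Hst) as Hsa.
  assert (Hr0 := Hr 0%nat ltac:(lia)). assert (Hr1 := Hr 1%nat ltac:(lia)).
  assert (Hnl : forall l, (l < L)%nat -> (n <= Phi L a b (b l))%nat).
  { intros l Hl. apply (proj1 (Age_iff L a b n (b l))). destruct l; [apply HZ; lra| apply (proj1 (Hess (S l) ltac:(lia)))]. }
  assert (Hpu : (Phi L a b u < n)%nat).
  { destruct (le_lt_dec n (Phi L a b u)); [|auto]. exfalso; apply Hnu, Age_iff; split; [lra|auto]. }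
  assert (HBu : forall k, (1 <= k < L)%nat -> u <= b k)
    by (intros k Hk; assert (b 1%nat <= b k) by (apply Hb; lia); lra).
  assert (Hsl : forall l, (1 <= l < L)%nat -> exists s, b l < s /\ s <= 1 /\
             (forall k, (S l <= k < L)%nat -> s <= b k) /\ (Phi L a b s < n)%nat).
  { intros l Hl. destruct (Hess l Hl) as [_ [[s [Hs Hns]] _]]. exists s.
    assert (Hbl := Hr l ltac:(lia)).
    destruct (lt_dec (S l) L) as [Hlt|Hlt].
    - rewrite (nxt_lt L b l Hlt) in Hs. assert (Hbs := Hr (S l) Hlt).
      split; [lra|split;[lra|split]].
      + intros k Hk. assert (b (S l) <= b k) by (apply Hb; lia). lra.
      + destruct (le_lt_dec n (Phi L a b s)); [|auto]. exfalso; apply Hns, Age_iff; split; [lra|auto].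
    - rewrite (nxt_ge L b l Hlt) in Hs. split; [lra|split;[lra|split]].
      + intros k Hk; exfalso; lia.
      + destruct (le_lt_dec n (Phi L a b s)); [|auto]. exfalso; apply Hns, Age_iff; split; [lra|auto]. }
  assert (H0 : forall k, (k < 0)%nat -> a k <= u) by (intros k Hk; exfalso; lia).
  pose proof (P_lower L a b u 0 1 ltac:(lia) H0 HBu) as HPu.
  destruct (le_lt_dec n L) as [HnL|HnL].
  - right. assert (n = L) by lia. split.
    + intros l Hl. destruct (Rle_dec (b l) (a l)) as [|Hc]; [auto|exfalso]. apply Rnot_le_lt in Hc.
      destruct l.
      * assert (Hx : forall k, (k < 1)%nat -> a k <= u) by (intros k Hk; replace k with 0%nat by lia; lra).
        pose proof (P_lower L a b u 1 1 ltac:(lia) Hx HBu). lia.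
      * destruct (Hsl (S l) ltac:(lia)) as [s [Hs1 [Hs2 [Hs3 Hs4]]]].
        assert (Hx : forall k, (k < S (S l))%nat -> a k <= s)
          by (intros k Hk; assert (a k <= a (S l)) by (apply Ha; lia); lra).
        pose proof (P_lower L a b s (S (S l)) (S (S l)) ltac:(lia) Hx Hs3). lia.
    + intros l Hl. destruct (Rle_dec (a l) (b (S l))) as [|Hc]; [auto|exfalso]. apply Rnot_le_lt in Hc.
      assert (Hx : forall k, (l <= k < L)%nat -> b (S l) < a k)
        by (intros k Hk; assert (a l <= a k) by (apply Ha; lia); lra).
      pose proof (P_upper L a b (b (S l)) l (S l) Hx ltac:(intros k Hk; apply Hsa; lia)).
      pose proof (Hnl (S l) Hl). lia.
  - left. assert (Hn2 : (n <= L + 1)%nat).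
    { pose proof (Hnl (L-1)%nat ltac:(lia)).
      assert (Hx : forall k, (L <= k < L)%nat -> b (L-1)%nat < a k) by (intros; exfalso; lia).
      pose proof (P_upper L a b (b (L-1)%nat) L (L-1)%nat Hx ltac:(intros k Hk; apply Hsa; lia)). lia. }
    split.
    + intros l Hl. destruct (Rle_dec (a l) (b l)) as [|Hc]; [auto|exfalso]. apply Rnot_le_lt in Hc.
      assert (Hx : forall k, (l <= k < L)%nat -> b l < a k) by (intros k Hk; assert (a l <= a k) by (apply Ha; lia); lra).
      pose proof (P_upper L a b (b l) l l Hx ltac:(intros k Hk; apply Hsa; lia)).
      pose proof (Hnl l Hl). lia.
    + intros l Hl. destruct (Rle_dec (b l) (a (S l))) as [|Hc]; [auto|exfalso]. apply Rnot_le_lt in Hc.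
      destruct l.
      * assert (Hx : forall k, (k < 2)%nat -> a k <= u)
          by (intros k Hk; assert (a k <= a 1%nat) by (apply Ha; lia); lra).
        pose proof (P_lower L a b u 2 1 ltac:(lia) Hx HBu). lia.
      * destruct (Hsl (S l) ltac:(lia)) as [s [Hs1 [Hs2 [Hs3 Hs4]]]].
        assert (Hx : forall k, (k < S (S (S l)))%nat -> a k <= s)
          by (intros k Hk; assert (a k <= a (S (S l))) by (apply Ha; lia); lra).
        pose proof (P_lower L a b s (S (S (S l))) (S (S l)) ltac:(lia) Hx Hs3). lia.
Qed.

Theorem mainTheorem6 (L : nat) (a b : nat -> R) :
  (0 < L)%nat ->
  (forall l, (l < L)%nat -> 0 <= a l <= 1 /\ 0 <= b l <= 1) ->
  nondecr L a -> nondecr L b ->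
  (forall n, (1 <= n <= 2 * L)%nat -> union_at_most L (Age L a b n)) /\
  (forall n, (1 <= n <= 2 * L)%nat -> ~ union_at_most (L - 1) (Age L a b n) ->
     interlace L a b \/ interlace L b a).
Proof.
  intros HL Hr Ha Hb.
  assert (Main : forall n, exists c, union_at_most c (Age L a b n) /\
     (forall j, (j < S L)%nat -> ~ KK L b (Age L a b n) j -> (c <= L)%nat) /\
     (forall i j, (i < j < S L)%nat -> ~ KK L b (Age L a b n) i -> ~ KK L b (Age L a b n) j -> (c <= L - 1)%nat)).
  { intros n. set (A := Age L a b n).
    assert (HA : forall x, A x -> 0 <= x <= 1) by (intros x [Hx _]; exact Hx).
    destruct (keep_cover (FF A b) (KK L b A) (S L)) as [c [I [H1 [H2 [H3 [H4 H5]]]]]].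
    { intros j Hj Kj. destruct j; simpl; [apply W_cyc | apply Lft_cyc]; auto. }
    exists c. split; [|split].
    - exists I. split; auto. intros t. rewrite H2. split.
      + intros Ht. apply (cover L a b n HL Hr Hb t Ht).
      + intros [j [_ [_ Fj]]]. destruct j; simpl in Fj.
        * destruct Fj as [[Ht _]|[Ht _]]; exact Ht.
        * destruct Fj as [Ht _]; exact Ht.
    - intros j Hj Kj. specialize (H4 j Hj Kj). lia.
    - intros i j Hij Ki Kj. specialize (H5 i j Hij Ki Kj). lia. }
  split.
  - intros n Hn. destruct (Main n) as [c [Hc [H4 _]]].
    apply (pad c); auto.
    set (A := Age L a b n) in *.
    destruct (classic (A 0)) as [A0|A0].
    + apply (H4 1%nat); [lia|]. simpl. intros [_ [_ [u [Hu Hnu]]]].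
      apply Hnu. apply (Zl L a b n HL Hr Hb A0 u Hu).
    + destruct (classic (A 1)) as [A1|A1].
      * apply (H4 (S (L-1))); [lia|]. simpl. intros [_ [[s [Hs _]] _]].
        rewrite nxt_ge in Hs by lia. rewrite (B1 L a b n HL Hr Hb A0 A1 (L-1)%nat ltac:(lia)) in Hs. lra.
      * apply (H4 0%nat); [lia|]. simpl. tauto.
  - intros n Hn Hnot.
    destruct (Nat.eq_dec L 1) as [HL1|HL1].
    + subst L. destruct (Rle_dec (a 0%nat) (b 0%nat)) as [h|h]; [left|right]; split; intros l Hl;
        try (exfalso; lia); assert (l = 0%nat) by lia; subst; lra.
    + destruct (Main n) as [c [Hc [_ H5]]].
      assert (HcL : (L <= c)%nat).
      { destruct (le_lt_dec L c); auto. exfalso; apply Hnot; apply (pad c); auto; lia. }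
      set (A := Age L a b n) in *.
      assert (Hall : forall i j, (i < S L)%nat -> (j < S L)%nat -> i <> j -> ~ KK L b A i -> KK L b A j).
      { intros i j Hi Hj Hij Ki. apply NNPP; intro Kj. destruct (lt_dec i j).
        - specialize (H5 i j ltac:(lia) Ki Kj); lia.
        - specialize (H5 j i ltac:(lia) Kj Ki); lia. }
      destruct (classic (A 0)) as [A0|A0].
      * apply (interl2 L a b n ltac:(lia) Hr Ha Hb A0).
        intros l Hl. apply (Hall 1%nat (S l)); try lia. simpl. intros [_ [_ [u [Hu Hnu]]]].
        apply Hnu, (Zl L a b n HL Hr Hb A0 u Hu).
      * left. apply (interl1 L a b n HL Hr Ha Hb A0).
        -- intros l Hl. destruct (classic (A 1)) as [A1|A1].
           ++ apply (Hall (S (L-1)) (S l)); try lia. simpl. intros [_ [[s [Hs _]] _]].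
              rewrite nxt_ge in Hs by lia.
              rewrite (B1 L a b n HL Hr Hb A0 A1 (L-1)%nat ltac:(lia)) in Hs. lra.
           ++ apply (Hall 0%nat (S l)); try lia. simpl. tauto.
        -- destruct (classic (A 1)) as [A1|A1].
           ++ rewrite (B1 L a b n HL Hr Hb A0 A1 (L-1)%nat ltac:(lia)). exact A1.
           ++ assert (E : ess L b A (L-1)). { apply (Hall 0%nat (S (L-1))); try lia. simpl; tauto. }
              destruct E as [E _]; exact E.
Qed.
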